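(* Let $d\in\mathbb{N}$. For all $u,v\in\mathbb{N}$, $$\begin{pmatrix}(1/v)\,I_d&0\\0&u\,I_d\end{pmatrix}\Pi\subseteq\Pi,$$ that is, $(x,y)\in\Pi$ implies $(x/v,\,uy)\in\Pi$.
   Context: For $z\in\mathbb{R}^d$, $\|z\|$ denotes the sup-norm distance from $z$ to $\mathbb{Z}^d$. Write $\mathbb{N}=\{1,2,\dots\}$. For $\psi:\mathbb{N}\to\mathbb{R}_{\ge 0}$, let $W(\psi)$ be the set of pairs $(x,y)\in\mathbb{R}^d\times\mathbb{R}^d$ for which $\|nx+y\|<\psi(n)$ holds for infinitely many $n\in\mathbb{N}$. $\mathcal{D}$ is the set of all non-increasing $\psi:\mathbb{N}\to\mathbb{R}_{\ge0}$ with $\sum_n\psi(n)^d=\infty$, and $\Pi=\bigcap_{\psi\in\mathcal{D}}W(\psi)$. $I_d$ is the $d\times d$ identity matrix. *)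

(* Defs.v *)
From HB Require Import structures.
From mathcomp Require Import all_boot all_order all_algebra.
From mathcomp Require Import all_classical all_reals all_analysis.
Unset Printing Implicit Defensive.
Import Order.TTheory GRing.Theory Num.Theory.
Local Open Scope classical_set_scope.
Local Open Scope ring_scope.

Definition supdistZ (R : realType) (d : nat) (z : 'I_d -> R) : R :=
  inf [set r : R | exists m : 'I_d -> int,
         r = \big[Num.max/0]_(i < d) `|z i - (m i)%:~R| ].

Definition W (R : realType) (d : nat) (psi : nat -> R) : set (('I_d -> R) * ('I_d -> R)) :=
  [set p | infinite_set
     [set n : nat | (0 < n)%N /\
        @supdistZ R d (fun i => n%:R * p.1 i + p.2 i) < psi n]].

Definition inD (R : realType) (d : nat) (psi : nat -> R) : Prop :=
  (forall n, (0 < n)%N -> 0 <= psi n) /\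
  (forall m n, (0 < m)%N -> (m <= n)%N -> psi n <= psi m) /\
  ([sequence \sum_(1 <= n < N.+1) psi n ^+ d]_N @ \oo --> +oo).

Definition Pi (R : realType) (d : nat) : set (('I_d -> R) * ('I_d -> R)) :=
  [set p | forall psi : nat -> R, @inD R d psi -> @W R d psi p].

(* Main.v *)
Require Import Defs.
From HB Require Import structures.
From mathcomp Require Import all_boot all_order all_algebra.
From mathcomp Require Import all_classical all_reals all_analysis.
From mathcomp Require Import ring lra.
Import Order.TTheory GRing.Theory Num.Theory.
Local Open Scope classical_set_scope.
Local Open Scope ring_scope.

Lemma bigmax_ge0 (R : realType) d (F : 'I_d -> R) :
  0 <= \big[Num.max/0]_(i < d) `|F i|.
Proof. by elim/big_ind: _ => // a b ha hb; rewrite le_max ha. Qed.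

Lemma supdist_scale (R : realType) d (u : nat) (z : 'I_d -> R) (c : R) :
  (0 < u)%N -> supdistZ R d z < c -> supdistZ R d (fun i => u%:R * z i) < u%:R * c.
Proof.
move=> hu; rewrite /supdistZ => /inf_lt [].
  by exists (\big[Num.max/0]_(i < d) `|z i - ((fun _ => 0%R : int) i)%:~R|); exists (fun _ => 0).
move=> _ [m ->] hlt.
have h1 : inf [set r : R | exists m0 : 'I_d -> int,
     r = \big[Num.max/0]_(i < d) `|u%:R * z i - (m0 i)%:~R| ] <=
   \big[Num.max/0]_(i < d) `|u%:R * z i - ((u%:Z * m i)%R)%:~R|.
  apply: ge_inf; last by exists (fun i => (u%:Z * m i)%R).
  by exists 0 => _ [m0 ->]; apply: bigmax_ge0.
apply: (le_lt_trans h1); apply: (@le_lt_trans _ _ (u%:R * \big[Num.max/0]_(i < d) `|z i - (m i)%:~R|)); last by rewrite ltr_pM2l ?ltr0n.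
apply: bigmax_le; first by rewrite mulr_ge0 // bigmax_ge0.
move=> i _.
rewrite intrM -mulrBr normrM ger0_norm // ler_wpM2l //.
exact: (le_bigmax 0 (fun i => `|z i - (m i)%:~R|) i).
Qed.

Lemma sum_sub {R : realType} {d} {psi : nat -> R} {k} (hk : (0 < k)%N)
  (hpos : forall n, (0 < n)%N -> 0 <= psi n)
  (hmon : forall m n, (0 < m)%N -> (m <= n)%N -> psi n <= psi m) M :
  \sum_(1 <= n < (k * M.+1).+1) psi n ^+ d <=
  \sum_(1 <= n < k.+1) psi n ^+ d + k%:R * \sum_(1 <= m < M.+1) psi (k * m)%N ^+ d.
Proof.
elim: M => [|M IH].
  by rewrite muln1 [X in _ * X]big_geq // mulr0 addr0.
rewrite (big_cat_nat _ (n := (k * M.+1).+1)) //=; last first.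
  by rewrite ltnS leq_mul2l leqnSn orbT.
rewrite [X in _ <= _ + _ * X]big_nat_recr //= mulrDr addrA lerD //.
apply: le_trans (ler_sum_nat (G := fun=> psi (k * M.+1)%N ^+ d) _) _.
  move=> i /andP [hi1 hi2]; apply: (@lerXn2r R d).
    by rewrite nnegrE hpos // (leq_trans _ hi1).
    by rewrite nnegrE hpos // muln_gt0 hk.
  by apply: hmon; [rewrite muln_gt0 hk | exact: ltnW].
by rewrite sumr_const_nat mulr_natl subSS [X in (X - _)%N]mulnS addnK.
Qed.

Theorem lemma11 (R : realType) (d : nat) (hd : (0 < d)%N) (u v : nat)
    (hu : (0 < u)%N) (hv : (0 < v)%N) (x y : 'I_d -> R) :
  Pi R d (x, y) ->
  Pi R d ((fun i => x i / v%:R), (fun i => u%:R * y i)).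
Proof.
move=> hPi psi [hpos [hmon hdiv]].
pose k := (u * v)%N.
have hk : (0 < k)%N by rewrite muln_gt0 hu hv.
pose phi := fun m => psi (k * m)%N / u%:R.
have hu' : (0:R) < u%:R by rewrite ltr0n.
have hphi : inD R d phi.
  split; [|split].
    by move=> n hn; rewrite /phi divr_ge0 // hpos // muln_gt0 hk.
  move=> m n hm hmn; rewrite /phi ler_pM2r ?invr_gt0 //.
  by apply: hmon; [rewrite muln_gt0 hk hm | rewrite leq_mul2l hmn orbT].
  apply/cvgryPge => A.
  move/cvgryPge: hdiv => /(_ (k%:R * (A * u%:R ^+ d) + \sum_(1 <= n < k.+1) psi n ^+ d)) [N0 _ HN0].
  exists N0 => // M /= hM.
  have hN : (N0 <= k * M.+1)%N.
    by apply: (leq_trans hM); apply: (leq_trans (leqnSn M)); rewrite leq_pmull.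
  have h := le_trans (HN0 _ hN) (sum_sub hk hpos hmon M : _ <= _).
  rewrite addrC lerD2l ler_pM2l ?ltr0n // in h.
  have -> : \sum_(1 <= i < M.+1) phi i ^+ d = (\sum_(1 <= i < M.+1) psi (k * i)%N ^+ d) / u%:R ^+ d.
    by rewrite mulr_suml; apply: eq_bigr => i _; rewrite /phi expr_div_n.
  by rewrite ler_pdivlMr // exprn_gt0.
have hW := hPi phi hphi.
rewrite /W /= in hW *.
move=> hfin; apply: hW.
apply: sub_finite_set (finite_preimage (f := fun m => (k * m)%N) _ hfin).
  move=> m [hm hlt]; split; first by rewrite muln_gt0 hk hm.
  have := @supdist_scale R d u _ _ hu hlt.
  rewrite /phi mulrC divfK ?lt0r_neq0 //.
  have -> : (fun i => u%:R * ((m%:R * x i + y i))) = (fun i => (k * m)%N%:R * (x i / v%:R) + u%:R * y i) => //.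
  apply/funext => i; rewrite /k !natrM.
  have hv' : (v%:R : R) != 0 by rewrite pnatr_eq0 -lt0n.
  rewrite mulrDr; congr (_ + _); rewrite -!mulrA; congr (_ * _).
  by rewrite mulrCA [v%:R * _]mulrC divfK.
move=> a b _ _ /eqP; rewrite eqn_mul2l (gtn_eqF hk) /= => /eqP //.
Qed.
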